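(* There is a constant $c$ such that for every $i\in\mathbb{N}$ there is an MSO formula $\zeta_i(X)$ over the vocabulary $\{Oc,\overline{Oc},Cl,Lt,U,B_\Box,D_\Diamond\}\cup\{Lv_j: j\ge0\}$, with one free set variable and of length at most $c(i+1)$, such that for every modal CNF formula $\phi$ and every set $C$ of domain elements of $\mathcal{S}(\phi)$ representing clauses at level at most $i$: $\mathrm{CNF}(C)$ is satisfiable at some world of some Kripke model with reflexive accessibility relation if and only if $\mathcal{S}(\phi)\models\zeta_i(C)$.
   Context: Modal CNF: literal ::= $q$ | $\neg q$ | $\Box$clause | $\Diamond$CNF; clause ::= literal | clause $\lor$ clause | $\bot$; CNF ::= clause | CNF $\wedge$ CNF, with $\bot$ occurring only inside subformulas $\Box\bot$. Levels: the top-level clauses of $\phi$ and their literals are at level $\mathrm{md}(\phi)$ (modal depth); if $\Box\,\mathrm{clause}_1$ is a literal at level $i$, $\mathrm{clause}_1$ and its literals are at level $i-1$; if $\Diamond(\mathrm{clause}_1\wedge\dots\wedge\mathrm{clause}_{m'})$ is at level $i$, those clauses and their literals are at level $i-1$. $\mathcal{S}(\phi)$: domain has one element per occurrence of a clause, one per occurrence of a literal of the form $\Box$clause or $\Diamond$CNF, and one per propositional variable (no element for $\bot$). $\overline{Oc}(e_1,e_2)$ iff $e_1$ is a clause and $e_2$ a variable occurring negated in it. $Oc(e_1,e_2)$ iff ($e_1$ a clause, $e_2$ a literal of it of the form $\Box$clause, $\Diamond$CNF or a non-negated variable) or ($e_1=\Box$clause, $e_2$ that clause) or ($e_1=\Diamond$CNF,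 $e_2$ a clause of that CNF). Unary relations $Cl$ (clauses), $Lt$ (literals), $U$ ($\Box\bot$ literals), $B_\Box$, $D_\Diamond$ ($\Box$- resp. $\Diamond$-literals), $Lv_j$ (clauses and literals at level $j$). For a set $C$ of clause elements, $\mathrm{CNF}(C)$ is the conjunction of the clauses represented by elements of $C$. *)

(* Defs.v *)
From HB Require Import structures.
From mathcomp Require Import all_boot.

Set Implicit Arguments.
Unset Strict Implicit.
Unset Printing Implicit Defensive.

(*   clause  ::= list of literals (disjunction); CNil = bottom          *)
(* Well-formedness (wf_cnf) enforces: a CNF has >= 1 clause, a clause   *)
(* has >= 1 literal, except that the argument of a Box may be bottom    *)
(* (CNil), i.e. bottom only occurs as Box bottom.                       *)
Inductive lit : Type :=
| LPos : nat -> lit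
| LNeg : nat -> lit
| LBox : clause -> lit
| LDia : cnf -> lit
with clause : Type :=
| CNil : clause
| CCons : lit -> clause -> clause
with cnf : Type :=
| FNil : cnf
| FCons : clause -> cnf -> cnf.

Definition clause_nonempty (c : clause) : bool :=
  if c is CNil then false else true.
Definition cnf_nonempty (f : cnf) : bool :=
  if f is FNil then false else true.

Fixpoint wf_lit (l : lit) : bool :=
  match l with
  | LPos _ | LNeg _ => true
  | LBox c => lits_wf c          (* c = CNil (bottom) allowed here only *)
  | LDia f => cnf_nonempty f && clauses_wf f
  end
with lits_wf (c : clause) : bool :=
  match c with
  | CNil => true
  | CCons l c' => wf_lit l && lits_wf c'
  end
with clauses_wf (f : cnf) : bool :=
  match f with
  | FNil => true
  | FCons c f' => [&& clause_nonempty c, lits_wf c & clauses_wf f']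
  end.

Definition wf_cnf (f : cnf) : bool := cnf_nonempty f && clauses_wf f.

Fixpoint md_lit (l : lit) : nat :=
  match l with
  | LPos _ | LNeg _ => 0
  | LBox c => (md_clause c).+1
  | LDia f => (md_cnf f).+1
  end
with md_clause (c : clause) : nat :=
  match c with
  | CNil => 0
  | CCons l c' => maxn (md_lit l) (md_clause c')
  end
with md_cnf (f : cnf) : nat :=
  match f with
  | FNil => 0
  | FCons c f' => maxn (md_clause c) (md_cnf f')
  end.

Section Kripke.
Variables (W : Type) (R : W -> W -> Prop) (V : nat -> W -> Prop).

Fixpoint lit_true (w : W) (l : lit) : Prop :=
  match l with
  | LPos q => V q w
  | LNeg q => ~ V q w
  | LBox c => forall v, R w v -> clause_true v c
  | LDia f => exists v, R w v /\ cnf_true v f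
  end
with clause_true (w : W) (c : clause) : Prop :=
  match c with
  | CNil => False
  | CCons l c' => lit_true w l \/ clause_true w c'
  end
with cnf_true (w : W) (f : cnf) : Prop :=
  match f with
  | FNil => True
  | FCons c f' => clause_true w c /\ cnf_true w f'
  end.
End Kripke.

Definition sat_reflexive (f : cnf) : Prop :=
  exists (W : Type) (R : W -> W -> Prop) (V : nat -> W -> Prop) (w : W),
    (forall x, R x x) /\ cnf_true R V w f.

(* Occurrences are addressed by paths (seq nat):                       *)
(*  - clause k of a CNF: k :: (path inside clause)                      *)
(*  - literal j of a clause: j :: (path inside literal)                 *)
(*  - the clause of Box c: 0 :: (path inside c)                         *)
(*  - the clauses of Dia f: as for a CNF.                               *)
(* Lookup returns the node at a path together with its level.          *)
Inductive node : Type := NClause of clause | NLit of lit.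

Fixpoint lit_at (l : lit) (lv : nat) (p : seq nat) {struct l}
  : option (node * nat) :=
  match p with
  | [::] => Some (NLit l, lv)
  | k :: p' =>
    match l with
    | LBox c => if k is 0 then clause_at c lv.-1 p' else None
    | LDia f => cnf_at f lv.-1 (k :: p')
    | _ => None
    end
  end
with clause_at (c : clause) (lv : nat) (p : seq nat) {struct c}
  : option (node * nat) :=
  match p with
  | [::] => Some (NClause c, lv)
  | j :: p' =>
    match c with
    | CNil => None
    | CCons l c' => if j is j'.+1 then clause_at c' lv (j' :: p')
                    else lit_at l lv p'
    end
  end
with cnf_at (f : cnf) (lv : nat) (p : seq nat) {struct f}
  : option (node * nat) :=
  match p, f with
  | k :: p', FCons c f' => if k is k'.+1 then cnf_at f' lv (k' :: p')
                           else clause_at c lv p'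
  | _, _ => None
  end.

(* top-level clauses are at level md(phi) *)
Definition node_at (phi : cnf) (p : seq nat) := cnf_at phi (md_cnf phi) p.

Definition shift (p : seq nat) : seq nat :=
  if p is k :: p' then k.+1 :: p' else [::].

Fixpoint lit_paths (l : lit) : seq (seq nat) :=
  [::] :: match l with
          | LBox c => [seq 0 :: p | p <- [::] :: clause_subpaths c]
          | LDia f => cnf_paths f
          | _ => [::]
          end
with clause_subpaths (c : clause) : seq (seq nat) :=
  match c with
  | CNil => [::]
  | CCons l c' => [seq 0 :: p | p <- lit_paths l]
                    ++ [seq shift p | p <- clause_subpaths c']
  end
with cnf_paths (f : cnf) : seq (seq nat) :=
  match f with
  | FNil => [::]
  | FCons c f' => [seq 0 :: p | p <- [::] :: clause_subpaths c]
                    ++ [seq shift p | p <- cnf_paths f']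
  end.

Fixpoint lit_vars (l : lit) : seq nat :=
  match l with
  | LPos q | LNeg q => [:: q]
  | LBox c => clause_vars c
  | LDia f => cnf_vars f
  end
with clause_vars (c : clause) : seq nat :=
  match c with
  | CNil => [::]
  | CCons l c' => lit_vars l ++ clause_vars c'
  end
with cnf_vars (f : cnf) : seq nat :=
  match f with
  | FNil => [::]
  | FCons c f' => clause_vars c ++ cnf_vars f'
  end.

Fixpoint clause_has_pos (c : clause) (q : nat) : bool :=
  match c with
  | CNil => false
  | CCons l c' => (if l is LPos q' then q' == q else false) || clause_has_pos c' q
  end.

Fixpoint clause_has_neg (c : clause) (q : nat) : bool :=
  match c with
  | CNil => false
  | CCons l c' => (if l is LNeg q' then q' == q else false) || clause_has_neg c' q
  end.

(* Elements: inl p  (occurrence at path p of a clause other than bottom,*)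
(*           or of a literal Box clause / Dia CNF),                    *)
(*           inr q  (propositional variable q occurring in phi).       *)
Definition elem : Type := (seq nat + nat)%type.

Definition is_elem_node (o : option (node * nat)) : bool :=
  match o with
  | Some (NClause CNil, _) => false
  | Some (NClause _, _) => true
  | Some (NLit (LBox _), _) => true
  | Some (NLit (LDia _), _) => true
  | _ => false
  end.

Definition S_list (phi : cnf) : seq elem :=
  [seq (inl p : elem) | p <- cnf_paths phi & is_elem_node (node_at phi p)]
  ++ [seq (inr q : elem) | q <- undup (cnf_vars phi)].

Definition node_of (phi : cnf) (e : elem) : option (node * nat) :=
  match e with inl p => node_at phi p | inr _ => None end.

Definition isCl phi e : bool :=
  if node_of phi e is Some (NClause _, _) then true else false.
Definition isB phi e : bool :=
  if node_of phi e is Some (NLit (LBox _), _) then true else false.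
Definition isD phi e : bool :=
  if node_of phi e is Some (NLit (LDia _), _) then true else false.
Definition isLt phi e : bool := isB phi e || isD phi e.
Definition isU phi e : bool :=
  if node_of phi e is Some (NLit (LBox CNil), _) then true else false.
Definition isLv phi (j : nat) e : bool :=
  if node_of phi e is Some (_, lv) then lv == j else false.

Definition child (p p' : seq nat) : bool :=
  (size p' == (size p).+1) && (take (size p) p' == p).

Definition isOc phi (e1 e2 : elem) : bool :=
  match e1, e2 with
  | inl p, inl p' =>
      child p p' &&
      [|| isCl phi e1 && isLt phi e2,
          isB phi e1 && isCl phi e2
        | isD phi e1 && isCl phi e2 ]
  | inl p, inr q =>
      if node_at phi p is Some (NClause c, _) then clause_has_pos c q else false
  | _, _ => false
  end.

Definition isOcb phi (e1 e2 : elem) : bool :=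
  match e1, e2 with
  | inl p, inr q =>
      if node_at phi p is Some (NClause c, _) then clause_has_neg c q else false
  | _, _ => false
  end.

Record rstruct := RStruct {
  rdom : finType;
  rOc : rel rdom;
  rOcb : rel rdom;
  rCl : pred rdom;
  rLt : pred rdom;
  rU : pred rdom;
  rB : pred rdom;
  rD : pred rdom;
  rLv : nat -> pred rdom
}.

Definition Sdom (phi : cnf) : finType := seq_sub (S_list phi).

Definition Sstruct (phi : cnf) : rstruct :=
  @RStruct (Sdom phi)
    (fun x y => isOc phi (val x) (val y))
    (fun x y => isOcb phi (val x) (val y))
    (fun x => isCl phi (val x))
    (fun x => isLt phi (val x))
    (fun x => isU phi (val x))
    (fun x => isB phi (val x))
    (fun x => isD phi (val x))
    (fun j x => isLv phi j (val x)).

Definition clause_of (phi : cnf) (e : elem) : clause :=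
  if node_of phi e is Some (NClause c, _) then c else CNil.

Definition CNF_of (phi : cnf) (C : {set Sdom phi}) : cnf :=
  foldr FCons FNil [seq clause_of phi (val e) | e <- enum C].

(* named by natural numbers (separate namespaces).                     *)
Inductive mso : Type :=
| MOc : nat -> nat -> mso
| MOcb : nat -> nat -> mso
| MCl : nat -> mso
| MLt : nat -> mso
| MU : nat -> mso
| MB : nat -> mso
| MD : nat -> mso
| MLv : nat -> nat -> mso          (* MLv j x  :  Lv_j(x) *)
| MEq : nat -> nat -> mso
| MIn : nat -> nat -> mso          (* MIn x X  :  x \in X *)
| MNot : mso -> mso
| MAnd : mso -> mso -> mso
| MOr : mso -> mso -> mso
| MEx1 : nat -> mso -> mso
| MAll1 : nat -> mso -> mso
| MEx2 : nat -> mso -> mso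
| MAll2 : nat -> mso -> mso.

(* length = number of symbols (each atom counts as one symbol) *)
Fixpoint mso_len (f : mso) : nat :=
  match f with
  | MNot g | MEx1 _ g | MAll1 _ g | MEx2 _ g | MAll2 _ g => (mso_len g).+1
  | MAnd g h | MOr g h => (mso_len g + mso_len h).+1
  | _ => 1
  end.

Fixpoint fv1 (f : mso) : seq nat :=
  match f with
  | MOc x y | MOcb x y | MEq x y => [:: x; y]
  | MCl x | MLt x | MU x | MB x | MD x | MLv _ x | MIn x _ => [:: x]
  | MNot g | MEx2 _ g | MAll2 _ g => fv1 g
  | MAnd g h | MOr g h => fv1 g ++ fv1 h
  | MEx1 x g | MAll1 x g => [seq y <- fv1 g | y != x]
  end.

Fixpoint fv2 (f : mso) : seq nat :=
  match f with
  | MIn _ X => [:: X]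
  | MNot g | MEx1 _ g | MAll1 _ g => fv2 g
  | MAnd g h | MOr g h => fv2 g ++ fv2 h
  | MEx2 X g | MAll2 X g => [seq Y <- fv2 g | Y != X]
  | _ => [::]
  end.

Definition upd {T : Type} (e : nat -> T) (n : nat) (v : T) : nat -> T :=
  fun m => if m == n then v else e m.

Section MSOsem.
Variable A : rstruct.

Definition at1 (e1 : nat -> option (rdom A)) (P : pred (rdom A)) x : Prop :=
  if e1 x is Some a then P a else False.
Definition at2 (e1 : nat -> option (rdom A)) (Q : rel (rdom A)) x y : Prop :=
  match e1 x, e1 y with Some a, Some b => Q a b | _, _ => False end.

Fixpoint mso_eval (e1 : nat -> option (rdom A)) (e2 : nat -> {set rdom A})
    (f : mso) : Prop :=
  match f with
  | MOc x y => at2 e1 (@rOc A) x y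
  | MOcb x y => at2 e1 (@rOcb A) x y
  | MCl x => at1 e1 (@rCl A) x
  | MLt x => at1 e1 (@rLt A) x
  | MU x => at1 e1 (@rU A) x
  | MB x => at1 e1 (@rB A) x
  | MD x => at1 e1 (@rD A) x
  | MLv j x => at1 e1 (@rLv A j) x
  | MEq x y => at2 e1 (fun a b => a == b) x y
  | MIn x X => at1 e1 (fun a => a \in e2 X) x
  | MNot g => ~ mso_eval e1 e2 g
  | MAnd g h => mso_eval e1 e2 g /\ mso_eval e1 e2 h
  | MOr g h => mso_eval e1 e2 g \/ mso_eval e1 e2 h
  | MEx1 x g => exists a : rdom A, mso_eval (upd e1 x (Some a)) e2 g
  | MAll1 x g => forall a : rdom A, mso_eval (upd e1 x (Some a)) e2 g
  | MEx2 X g => exists Y : {set rdom A}, mso_eval e1 (upd e2 X Y) g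
  | MAll2 X g => forall Y : {set rdom A}, mso_eval e1 (upd e2 X Y) g
  end.

(* A |= zeta(C), for zeta whose only free variable is the set variable 0 *)
Definition models1 (zeta : mso) (C : {set rdom A}) : Prop :=
  mso_eval (fun _ => None) (fun n => if n == 0 then C else set0) zeta.
End MSOsem.

(* zeta has exactly one (possibly vacuous) free variable: set variable 0 *)
Definition one_free_setvar (zeta : mso) : Prop :=
  fv1 zeta = [::] /\ {subset fv2 zeta <= [:: 0]}.

(* Main.v *)
Require Import Defs.
From HB Require Import structures.
From mathcomp Require Import all_boot.
From Stdlib Require Import Classical ClassicalEpsilon Lia.

Set Implicit Arguments.
Unset Strict Implicit.
Unset Printing Implicit Defensive.


Scheme lit_ind2 := Induction for lit Sort Prop
with clause_ind2 := Induction for clause Sort Prop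
with cnf_ind2 := Induction for cnf Sort Prop.
Combined Scheme syn_ind from lit_ind2, clause_ind2, cnf_ind2.

Definition node_lookup (n : node) lv q :=
  match n with NClause c => clause_at c lv q | NLit l => lit_at l lv q end.

Definition ob (o : option (node * nat)) q :=
  if o is Some (n, lv) then node_lookup n lv q else None.

Lemma comp_all :
  (forall l lv p q, lit_at l lv (p ++ q) = ob (lit_at l lv p) q) /\
  (forall c lv p q, clause_at c lv (p ++ q) = ob (clause_at c lv p) q) /\
  (forall f lv p q, p != [::] -> cnf_at f lv (p ++ q) = ob (cnf_at f lv p) q).
Proof.
apply: syn_ind.
- by move=> n lv [|k p] q.
- by move=> n lv [|k p] q.
- move=> c IH lv [|k p] q //=. by case: k.
- move=> f IH lv [|k p] q //=. exact: (IH _ (k :: p)).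
- by move=> lv [|k p] q.
- move=> l IHl c IHc lv [|[|j] p] q //=. exact: (IHc lv (j :: p)).
- by move=> lv [|k p] q.
- move=> c IHc f IHf lv [|[|k] p] q //= _. exact: (IHf lv (k :: p)).
Qed.

Lemma paths_all :
  (forall l lv p, isSome (lit_at l lv p) -> p \in lit_paths l) /\
  (forall c lv p, isSome (clause_at c lv p) -> p \in [::] :: clause_subpaths c) /\
  (forall f lv p, isSome (cnf_at f lv p) -> p \in cnf_paths f).
Proof.
apply: syn_ind.
- by move=> n lv [|k p].
- by move=> n lv [|k p].
- move=> c IH lv [|[|k] p] //= H. rewrite inE; apply/orP; right.
  exact: (map_f (cons 0) (IH _ _ H)).
- move=> f IH lv [|k p] //= H. rewrite inE; apply/orP; right. exact: IH H.
- by move=> lv [|k p].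
- move=> l IHl c IHc lv [|[|j] p] //= H; rewrite inE; apply/orP; right;
    rewrite mem_cat; apply/orP.
  + left. exact: (map_f (cons 0) (IHl _ _ H)).
  + right. have := IHc lv (j :: p) H. rewrite inE /= => H'.
    exact: (map_f shift H').
- by move=> lv [|k p].
- move=> c IHc f IHf lv [|[|k] p] //= H; rewrite -cat_cons mem_cat; apply/orP.
  + left. exact: (map_f (cons 0) (IHc _ _ H)).
  + right. exact: (map_f shift (IHf lv (k :: p) H)).
Qed.

Definition node_vars n := match n with NClause c => clause_vars c | NLit l => lit_vars l end.
Definition node_wf n := match n with NClause c => lits_wf c | NLit l => wf_lit l end.
Definition node_md n := match n with NClause c => md_clause c | NLit l => md_lit l end.

Lemma vars_all :
  (forall l lv p n lv', lit_at l lv p = Some (n, lv') -> {subset node_vars n <= lit_vars l}) /\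
  (forall c lv p n lv', clause_at c lv p = Some (n, lv') -> {subset node_vars n <= clause_vars c}) /\
  (forall f lv p n lv', cnf_at f lv p = Some (n, lv') -> {subset node_vars n <= cnf_vars f}).
Proof.
apply: syn_ind.
- by move=> q lv [|k p] //= n lv' [<- _].
- by move=> q lv [|k p] //= n lv' [<- _].
- move=> c IH lv [|[|k] p] //= n lv'; first by move=> [<- _].
  exact: IH.
- move=> f IH lv [|k p] //= n lv'; first by move=> [<- _].
  exact: IH.
- by move=> lv [|k p] //= n lv' [<- _].
- move=> l IHl c IHc lv [|[|j] p] //= n lv'; first by move=> [<- _].
  + move=> H x Hx. rewrite mem_cat (IHl _ _ _ _ H) //.
  + move=> H x Hx. rewrite mem_cat (IHc _ _ _ _ H) ?orbT //.
- by move=> lv [|k p].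
- move=> c IHc f IHf lv [|[|k] p] //= n lv'.
  + move=> H x Hx. rewrite mem_cat (IHc _ _ _ _ H) //.
  + move=> H x Hx. rewrite mem_cat (IHf _ _ _ _ H) ?orbT //.
Qed.

Lemma wf_all :
  (forall l lv p n lv', wf_lit l -> lit_at l lv p = Some (n, lv') -> node_wf n) /\
  (forall c lv p n lv', lits_wf c -> clause_at c lv p = Some (n, lv') -> node_wf n) /\
  (forall f lv p n lv', clauses_wf f -> cnf_at f lv p = Some (n, lv') -> node_wf n).
Proof.
apply: syn_ind.
- by move=> q lv [|k p] //= n lv' _ [<- _].
- by move=> q lv [|k p] //= n lv' _ [<- _].
- move=> c IH lv [|[|k] p] //= n lv' W; first by move=> [<- _].
  exact: IH.
- move=> f IH lv [|k p] //= n lv' W; first by move=> [<- _].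
  case/andP: W => _ W. exact: IH.
- by move=> lv [|k p] //= n lv' _ [<- _].
- move=> l IHl c IHc lv [|[|j] p] //= n lv' W; first by move=> [<- _].
  + case/andP: W => W _. exact: IHl.
  + case/andP: W => _ W. exact: IHc.
- by move=> lv [|k p].
- move=> c IHc f IHf lv [|[|k] p] //= n lv' /and3P [_ W1 W2].
  + exact: IHc.
  + exact: IHf.
Qed.

Lemma md_all :
  (forall l lv p n lv', md_lit l <= lv -> lit_at l lv p = Some (n, lv') -> node_md n <= lv') /\
  (forall c lv p n lv', md_clause c <= lv -> clause_at c lv p = Some (n, lv') -> node_md n <= lv') /\
  (forall f lv p n lv', md_cnf f <= lv -> cnf_at f lv p = Some (n, lv') -> node_md n <= lv').
Proof.
apply: syn_ind.
- by move=> q lv [|k p] //= n lv' W [<- <-].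
- by move=> q lv [|k p] //= n lv' W [<- <-].
- move=> c IH lv [|[|k] p] //= n lv' W; first by move=> [<- <-].
  apply: IH. by case: lv W.
- move=> f IH lv [|k p] //= n lv' W; first by move=> [<- <-].
  apply: IH. by case: lv W.
- by move=> lv [|k p] //= n lv' W [<- <-].
- move=> l IHl c IHc lv [|[|j] p] //= n lv' W; first by move=> [<- <-].
  + apply: IHl. by rewrite geq_max in W; case/andP: W.
  + apply: IHc. by rewrite geq_max in W; case/andP: W.
- by move=> lv [|k p].
- move=> c IHc f IHf lv [|[|k] p] //= n lv'; rewrite geq_max => /andP [W1 W2].
  + exact: IHc.
  + exact: IHf.
Qed.

Lemma lit_at_nil l lv : lit_at l lv [::] = Some (NLit l, lv).
Proof. by case: l. Qed.
Lemma clause_at_nil c lv : clause_at c lv [::] = Some (NClause c, lv).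
Proof. by case: c. Qed.

Section Steps.
Variables (W : Type) (R : W -> W -> Prop) (V : nat -> W -> Prop).

Lemma clause_step c lv j n lv' : clause_at c lv [:: j] = Some (n, lv') ->
  exists l, [/\ n = NLit l, lv' = lv,
    (forall w, lit_true R V w l -> clause_true R V w c),
    md_lit l <= md_clause c &
    [/\ forall q, l = LPos q -> clause_has_pos c q &
        forall q, l = LNeg q -> clause_has_neg c q]].
Proof.
elim: c j => [|l c IH] [|j] //=.
- rewrite lit_at_nil => -[<- <-]. exists l; split => //.
  + by move=> w H; left.
  + exact: leq_maxl.
  + by split=> q -> /=; rewrite eqxx.
- move=> /IH [l' [-> -> H1 H2 [H3 H4]]]. exists l'; split => //.
  + by move=> w H; right; apply: H1.
  + exact: leq_trans H2 (leq_maxr _ _).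
  + by split=> q E; [rewrite (H3 q E) orbT | rewrite (H4 q E) orbT].
Qed.

Lemma clause_true_step c lv w : clause_true R V w c ->
  exists j l, clause_at c lv [:: j] = Some (NLit l, lv) /\ lit_true R V w l.
Proof.
elim: c => [|l c IH] //= [H|H].
- by exists 0, l; rewrite lit_at_nil.
- have [j [l' [H1 H2]]] := IH H. by exists j.+1, l'.
Qed.

Lemma has_pos_true c q w : clause_has_pos c q -> V q w -> clause_true R V w c.
Proof.
elim: c => [|l c IH] //= /orP [H|H] Hq; last by right; apply: IH.
left; case: l H => //= q' /eqP -> //.
Qed.

Lemma has_neg_true c q w : clause_has_neg c q -> ~ V q w -> clause_true R V w c.
Proof.
elim: c => [|l c IH] //= /orP [H|H] Hq; last by right; apply: IH.
left; case: l H => //= q' /eqP -> //.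
Qed.

Lemma cnf_step f lv k n lv' : cnf_at f lv [:: k] = Some (n, lv') ->
  exists c, [/\ n = NClause c, lv' = lv,
    (forall w, cnf_true R V w f -> clause_true R V w c) &
    (clauses_wf f -> clause_nonempty c)].
Proof.
elim: f k => [|c f IH] [|k] //=.
- rewrite clause_at_nil => -[<- <-]. exists c; split => //.
  + by move=> w [].
  + by case/and3P.
- move=> /IH [c' [-> -> H1 H2]]. exists c'; split => //.
  + by move=> w [_ /H1].
  + by case/and3P => _ _ /H2.
Qed.

Lemma cnf_true_step f lv w :
  (forall k c, cnf_at f lv [:: k] = Some (NClause c, lv) -> clause_true R V w c) ->
  cnf_true R V w f.
Proof.
elim: f => [|c f IH] //= H. split.
- apply: (H 0). by rewrite /= clause_at_nil.
- apply: IH => k c' Hk. exact: (H k.+1).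
Qed.

End Steps.

Section Bisim.
Variables (W1 : Type) (R1 : W1 -> W1 -> Prop) (V1 : nat -> W1 -> Prop).
Variables (W2 : Type) (R2 : W2 -> W2 -> Prop) (V2 : nat -> W2 -> Prop).
Variable Z : W1 -> W2 -> Prop.
Hypothesis HV : forall x y q, Z x y -> (V1 q x <-> V2 q y).
Hypothesis Hforth : forall x y x', Z x y -> R1 x x' -> exists y', R2 y y' /\ Z x' y'.
Hypothesis Hback : forall x y y', Z x y -> R2 y y' -> exists x', R1 x x' /\ Z x' y'.

Lemma bisim_all :
  (forall l x y, Z x y -> (lit_true R1 V1 x l <-> lit_true R2 V2 y l)) /\
  (forall c x y, Z x y -> (clause_true R1 V1 x c <-> clause_true R2 V2 y c)) /\
  (forall f x y, Z x y -> (cnf_true R1 V1 x f <-> cnf_true R2 V2 y f)).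
Proof.
apply: syn_ind.
- move=> q x y Z0 /=. exact: HV.
- move=> q x y Z0 /=. by rewrite (HV q Z0).
- move=> c IH x y Z0 /=; split.
  + move=> H y' Ry. have [x' [Rx Z']] := Hback Z0 Ry. by apply/(IH _ _ Z'); apply: H.
  + move=> H x' Rx. have [y' [Ry Z']] := Hforth Z0 Rx. by apply/(IH _ _ Z'); apply: H.
- move=> f IH x y Z0 /=; split.
  + move=> [x' [Rx H]]. have [y' [Ry Z']] := Hforth Z0 Rx. exists y'; split=> //.
    by apply/(IH _ _ Z').
  + move=> [y' [Ry H]]. have [x' [Rx Z']] := Hback Z0 Ry. exists x'; split=> //.
    by apply/(IH _ _ Z').
- by [].
- move=> l IHl c IHc x y Z0 /=. by rewrite (IHl _ _ Z0) (IHc _ _ Z0).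
- by [].
- move=> c IHc f IHf x y Z0 /=. by rewrite (IHc _ _ Z0) (IHf _ _ Z0).
Qed.
End Bisim.



Definition imp a b := MOr (MNot a) b.
Definition fA1 := MAll1 0 (imp (MIn 0 0) (MIn 0 1)).
Definition fA2 := MAll1 0 (imp (MIn 0 1) (MAnd (MCl 0)
   (MOr (MEx1 1 (MAnd (MOc 0 1) (MIn 1 2))) (MEx1 1 (MAnd (MOcb 0 1) (MNot (MIn 1 2))))))).
Definition fA3 := MAll1 0 (MAll1 1 (imp (MIn 0 1) (imp (MOc 0 1) (imp (MIn 1 2)
   (imp (MB 1) (MEx1 2 (MAnd (MOc 1 2) (MIn 2 1)))))))).
Definition fdia0 := MAll1 0 (MAll1 1 (MNot (MAnd (MIn 0 1) (MAnd (MOc 0 1)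
   (MAnd (MIn 1 2) (MD 1)))))).
Definition frhs := MOr (MOc 1 2) (MEx1 3 (MEx1 0 (MAnd (MIn 0 1) (MAnd (MOc 0 3)
   (MAnd (MIn 3 2) (MAnd (MB 3) (MOc 3 2))))))).
Definition fYdef := MAll1 2 (MAnd (imp (MIn 2 0) frhs) (imp frhs (MIn 2 0))).
Definition fdiaS z := MAll1 0 (MAll1 1 (imp (MIn 0 1) (imp (MOc 0 1) (imp (MIn 1 2)
   (imp (MD 1) (MAll2 0 (imp fYdef z))))))).
Definition fbody dia := MEx2 1 (MEx2 2 (MAnd fA1 (MAnd fA2 (MAnd fA3 dia)))).
Fixpoint zeta (i : nat) : mso :=
  match i with 0 => fbody fdia0 | i'.+1 => fbody (fdiaS (zeta i')) end.

Section Sem.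
Variable A : rstruct.
Local Notation T := (rdom A).

Definition body (X D Tr : {set T}) :=
  [/\ (forall x, x \in X -> x \in D),
      (forall x, x \in D -> rCl x /\
          ((exists y, rOc x y /\ y \in Tr) \/ (exists y, rOcb x y /\ ~ y \in Tr))) &
      (forall x y, x \in D -> rOc x y -> y \in Tr -> rB y ->
          exists z, rOc y z /\ z \in D)].

Definition Ydef (D Tr : {set T}) (d : T) (Y : {set T}) :=
  forall z, z \in Y <-> (rOc d z \/ exists b e, e \in D /\ rOc e b /\ b \in Tr /\ rB b /\ rOc b z).

Fixpoint Zsem (i : nat) (X : {set T}) : Prop :=
  exists D Tr, body X D Tr /\
  match i with
  | 0 => forall x y, ~ (x \in D /\ rOc x y /\ y \in Tr /\ rD y)
  | i'.+1 => forall x y, x \in D -> rOc x y -> y \in Tr -> rD y ->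
       forall Y, Ydef D Tr y Y -> Zsem i' Y
  end.

Local Notation ev := (@mso_eval A).

Lemma orI (P Q : Prop) : (P -> Q) -> ~ P \/ Q.
Proof. by move=> H; case: (classic P) => HP; [right; apply: H|left]. Qed.
Lemma orE (P Q : Prop) : ~ P \/ Q -> P -> Q.
Proof. by case. Qed.

Lemma eval_imp e1 e2 a b :
  ev e1 e2 (imp a b) <-> (ev e1 e2 a -> ev e1 e2 b).
Proof. split; [exact: orE | exact: orI]. Qed.

Lemma eval_A1 e1 e2 : ev e1 e2 fA1 <-> (forall x, x \in e2 0 -> x \in e2 1).
Proof.
rewrite /= /upd /at1 /at2 /=.
split=> H x; [move=> Hx; exact: orE (H x) Hx | exact: orI (H x)].
Qed.

Lemma eval_A2 e1 e2 : ev e1 e2 fA2 <-> (forall x, x \in e2 1 -> rCl x /\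
          ((exists y, rOc x y /\ y \in e2 2) \/ (exists y, rOcb x y /\ ~ y \in e2 2))).
Proof.
rewrite /= /upd /at1 /at2 /=.
split=> H x; [move=> Hx; exact: orE (H x) Hx | exact: orI (H x)].
Qed.

Lemma eval_A3 e1 e2 : ev e1 e2 fA3 <-> (forall x y, x \in e2 1 -> rOc x y -> y \in e2 2 -> rB y ->
          exists z, rOc y z /\ z \in e2 1).
Proof.
rewrite /= /upd /at1 /at2 /=.
split=> H x y.
- move=> H1 H2 H3 H4.
  by move: (H x y) => /orE/(_ H1)/orE/(_ H2)/orE/(_ H3)/orE/(_ H4).
- apply: orI => H1; apply: orI => H2; apply: orI => H3; apply: orI => H4.
  exact: (H x y H1 H2 H3 H4).
Qed.

Lemma eval_dia0 e1 e2 : ev e1 e2 fdia0 <->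
   (forall x y, ~ (x \in e2 1 /\ rOc x y /\ y \in e2 2 /\ rD y)).
Proof. by rewrite /= /upd /at1 /at2 /=. Qed.

Lemma eval_Ydef e1 e2 d : e1 1 = Some d ->
  ev e1 e2 fYdef <-> Ydef (e2 1) (e2 2) d (e2 0).
Proof.
move=> E. rewrite /= /upd /at1 /at2 /= E.
split=> H z.
- have [H1 H2] := H z. split; [exact: orE H1 | exact: orE H2].
- have [H1 H2] := H z. split; exact: orI.
Qed.

Lemma eval_body dia e1 e2 : ev e1 e2 (fbody dia) <->
  exists D Tr, body (e2 0) D Tr /\ ev e1 (upd (upd e2 1 D) 2 Tr) dia.
Proof.
split.
- move=> [D [Tr [H1 [H2 [H3 H4]]]]]. exists D, Tr.
  move/eval_A1: H1. move/eval_A2: H2. move/eval_A3: H3. rewrite /upd /= => H3 H2 H1.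
  by split.
- move=> [D [Tr [[H1 H2 H3] H4]]]. exists D, Tr.
  split; [apply/eval_A1|split; [apply/eval_A2|split; [apply/eval_A3|exact: H4]]];
  by rewrite /upd /=.
Qed.

Lemma eval_diaS z e1 e2 : ev e1 e2 (fdiaS z) <->
  (forall x y, x \in e2 1 -> rOc x y -> y \in e2 2 -> rD y ->
     forall Y, Ydef (e2 1) (e2 2) y Y ->
     ev (upd (upd e1 0 (Some x)) 1 (Some y)) (upd e2 0 Y) z).
Proof.
split.
- move=> H x y H1 H2 H3 H4 Y HY.
  have K := H x y.
  have {K} := orE K H1. move=> /orE/(_ H2)/orE/(_ H3)/orE/(_ H4)/(_ Y)/orE; apply.
  by apply: (proj2 (@eval_Ydef _ _ y _)).
- move=> H x y; apply: orI => H1; apply: orI => H2; apply: orI => H3;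
  apply: orI => H4 Y; apply: orI => HY.
  apply: H => //. exact: (proj1 (@eval_Ydef _ _ y _) HY).
Qed.

Lemma zeta_eval i : forall e1 e2, ev e1 e2 (zeta i) <-> Zsem i (e2 0).
Proof.
elim: i => [|i IH] e1 e2.
- rewrite /zeta eval_body.
  by split => -[D [Tr [B H]]]; exists D, Tr; split => //.
- rewrite /zeta -/zeta eval_body.
  split => -[D [Tr [B H]]]; exists D, Tr; split => //.
  + move=> x y H1 H2 H3 H4 Y HY.
    move/eval_diaS: H => /(_ x y H1 H2 H3 H4 Y HY) /IH. done.
  + apply/eval_diaS => x y H1 H2 H3 H4 Y HY. apply/IH. exact: (H x y).
Qed.

End Sem.

Lemma fv1_zeta i : fv1 (zeta i) = [::].
Proof. elim: i => [|i IH] //=. by rewrite IH. Qed.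

Lemma fv2_zeta i : all (fun y => y == 0) (fv2 (zeta i)).
Proof.
elim: i => [|i IH] //=.
have -> : [seq Y <- fv2 (zeta i) | Y != 0] = [::].
  elim: (fv2 (zeta i)) IH => [|a s IHs] //= /andP [/eqP -> H]. exact: IHs.
done.
Qed.

Lemma len_zeta i : mso_len (zeta i) <= 100 * i.+1.
Proof.
elim: i => [|i IH] //=.
move/leP: IH => IH. apply/leP. rewrite -!plusE -!multE in IH *. lia.
Qed.



Section Main.
Variable phi : cnf.
Hypothesis Hwf : wf_cnf phi.
Local Notation S := (Sdom phi).

Definition nd (x : S) := node_of phi (val x).

Lemma memS_inl p : (inl p : elem) \in S_list phi =
   (p \in cnf_paths phi) && is_elem_node (node_at phi p).
Proof.
rewrite /S_list mem_cat.
have -> : ((inl p : elem) \in [seq (inr q : elem) | q <- undup (cnf_vars phi)]) = false.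
  by apply/negbTE/mapP => -[q _].
rewrite orbF mem_map; last by move=> a b [].
by rewrite mem_filter andbC.
Qed.

Lemma memS_inr q : (inr q : elem) \in S_list phi = (q \in cnf_vars phi).
Proof.
rewrite /S_list mem_cat.
have -> : ((inr q : elem) \in [seq (inl p : elem) | p <- cnf_paths phi & is_elem_node (node_at phi p)]) = false.
  by apply/negbTE/mapP => -[p _].
rewrite /= mem_map; last by move=> a b [].
by rewrite mem_undup.
Qed.

Lemma node_at_nil : node_at phi [::] = None.
Proof. by rewrite /node_at; case: phi. Qed.

Lemma path_of_node p n lv : node_at phi p = Some (n, lv) -> p \in cnf_paths phi.
Proof. move=> H. apply: (paths_all.2.2 phi (md_cnf phi)). by rewrite /node_at in H; rewrite H. Qed.

Lemma mkel p n lv : node_at phi p = Some (n, lv) -> is_elem_node (Some (n, lv)) ->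
  exists x : S, val x = inl p /\ nd x = Some (n, lv).
Proof.
move=> H E. have M : (inl p : elem) \in S_list phi.
  by rewrite memS_inl (path_of_node H) H.
by exists (SeqSub M).
Qed.

Lemma mkvar q : q \in cnf_vars phi -> exists x : S, val x = inr q.
Proof. move=> H. rewrite -memS_inr in H. by exists (SeqSub H). Qed.

Lemma child_lemma p p' n lv : node_at phi p = Some (n, lv) -> child p p' ->
  exists k, p' = rcons p k /\ node_at phi p' = node_lookup n lv [:: k].
Proof.
move=> H /andP [/eqP Hs /eqP Ht].
have : size (drop (size p) p') = 1 by rewrite size_drop Hs subSnn.
case E: (drop (size p) p') => [|k [|]] // _.
exists k. have Ep : p' = rcons p k by rewrite -(cat_take_drop (size p) p') Ht E cats1.
split=> //. rewrite Ep -cats1 /node_at (comp_all.2.2) //=.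
- by rewrite /node_at in H; rewrite H.
- by apply/eqP => Ep0; rewrite Ep0 node_at_nil in H.
Qed.

Lemma child_rcons p k : child p (rcons p k).
Proof. by rewrite /child size_rcons eqxx -cats1 take_cat ltnn subnn take0 cats0 /=. Qed.

Lemma node_rcons p k n lv : node_at phi p = Some (n, lv) ->
  node_at phi (rcons p k) = node_lookup n lv [:: k].
Proof.
move=> H. rewrite -cats1 /node_at (comp_all.2.2) //=.
- by rewrite /node_at in H; rewrite H.
- by apply/eqP => Ep0; rewrite Ep0 node_at_nil in H.
Qed.

Lemma nd_inl (x : S) p : val x = inl p -> exists n lv, nd x = Some (n, lv).
Proof.
move=> E. have := valP x. rewrite E memS_inl => /andP [_].
rewrite /nd E /=. case: (node_at phi p) => // -[n lv] _. by exists n, lv.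
Qed.

Lemma nd_md (x : S) n lv : nd x = Some (n, lv) -> node_md n <= lv.
Proof.
rewrite /nd. case: (val x) => //= p H. exact: (md_all.2.2 phi (md_cnf phi) p).
Qed.

Lemma nd_wf (x : S) n lv : nd x = Some (n, lv) -> node_wf n.
Proof.
rewrite /nd. case: (val x) => //= p H. apply: (wf_all.2.2 phi (md_cnf phi) p) H.
by case/andP: Hwf.
Qed.

Lemma nd_elem (x : S) n lv : nd x = Some (n, lv) -> is_elem_node (Some (n, lv)).
Proof.
rewrite /nd. case E: (val x) => [p|q] //= H. have := valP x.
by rewrite E memS_inl H => /andP [].
Qed.


Lemma clause_step_gen c lv j n lv' : clause_at c lv [:: j] = Some (n, lv') ->
  exists l, [/\ n = NLit l, lv' = lv,
    (forall (W : Type) (R : W -> W -> Prop) V w, lit_true R V w l -> clause_true R V w c),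
    md_lit l <= md_clause c &
    [/\ forall q, l = LPos q -> clause_has_pos c q &
        forall q, l = LNeg q -> clause_has_neg c q]].
Proof.
move=> H. have [l [E1 E2 _ H3 H4]] := clause_step (fun _ _ : unit => True) (fun _ _ => True) H.
exists l; split => // W R V w. have [l' [E1' _ H2' _ _]] := clause_step R V H.
by move: E1'; rewrite E1 => -[->]; apply: H2'.
Qed.

Lemma cnf_step_gen f lv k n lv' : cnf_at f lv [:: k] = Some (n, lv') ->
  exists c, [/\ n = NClause c, lv' = lv,
    (forall (W : Type) (R : W -> W -> Prop) V w, cnf_true R V w f -> clause_true R V w c) &
    (clauses_wf f -> clause_nonempty c)].
Proof.
move=> H. have [c [E1 E2 _ H4]] := cnf_step (fun _ _ : unit => True) (fun _ _ => True) H.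
exists c; split => // W R V w. have [c' [E1' _ H2' _]] := cnf_step R V H.
by move: E1'; rewrite E1 => -[->]; apply: H2'.
Qed.

Lemma Oc_clause (x y : S) c lv : nd x = Some (NClause c, lv) -> isOc phi (val x) (val y) ->
 (exists q, val y = inr q /\ clause_has_pos c q) \/
 (exists l, nd y = Some (NLit l, lv) /\
   (forall (W : Type) (R : W -> W -> Prop) V w, lit_true R V w l -> clause_true R V w c) /\
   md_lit l <= md_clause c).
Proof.
rewrite /nd. case Ex: (val x) => [p|q] //= Hx.
case Ey: (val y) => [p'|q'] /=.
- case/andP => Hc _. have [k [_ Hk]] := child_lemma Hx Hc.
  rewrite /= in Hk. have [n [lv' Hn]] := nd_inl Ey. rewrite /nd Ey /= Hk in Hn.
  rewrite Hk Hn.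
  have [l [E1 E2 H3 H4 _]] := clause_step_gen Hn. subst.
  right. by exists l.
- rewrite Hx => H. left. by exists q'.
Qed.

Lemma Ocb_clause (x y : S) c lv : nd x = Some (NClause c, lv) -> isOcb phi (val x) (val y) ->
 exists q, val y = inr q /\ clause_has_neg c q.
Proof.
rewrite /nd. case Ex: (val x) => [p|q] //= Hx.
case Ey: (val y) => [p'|q'] //=. rewrite Hx => H. by exists q'.
Qed.

Lemma Oc_box (y z : S) c lv : nd y = Some (NLit (LBox c), lv) -> isOc phi (val y) (val z) ->
  nd z = Some (NClause c, lv.-1).
Proof.
rewrite /nd. case Ey: (val y) => [p|q] //= Hy.
case Ez: (val z) => [p'|q'] /=; last by rewrite Hy.
case/andP => Hc _. have [k [_ Hk]] := child_lemma Hy Hc.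
rewrite /= in Hk. have [n [lv' Hn]] := nd_inl Ez. rewrite /nd Ez /= Hk in Hn.
rewrite Hk Hn. case: k Hk Hn => [|k] /= _; rewrite ?clause_at_nil //.
Qed.

Lemma Oc_dia (y z : S) f lv : nd y = Some (NLit (LDia f), lv) -> isOc phi (val y) (val z) ->
  exists c, nd z = Some (NClause c, lv.-1) /\
    (forall (W : Type) (R : W -> W -> Prop) V w, cnf_true R V w f -> clause_true R V w c).
Proof.
rewrite /nd. case Ey: (val y) => [p|q] //= Hy.
case Ez: (val z) => [p'|q'] /=; last by rewrite Hy.
case/andP => Hc _. have [k [_ Hk]] := child_lemma Hy Hc.
rewrite /= in Hk. have [n [lv' Hn]] := nd_inl Ez. rewrite /nd Ez /= Hk in Hn.
rewrite Hk Hn.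
have [c [E1 E2 H3 _]] := cnf_step_gen Hn. subst. by exists c.
Qed.


Lemma has_pos_vars c q : clause_has_pos c q -> q \in clause_vars c.
Proof.
elim: c => [|l c IH] //= /orP [H|H]; rewrite mem_cat; apply/orP; last by right; apply: IH.
left; case: l H => //= q' /eqP ->; by rewrite inE.
Qed.

Lemma has_neg_vars c q : clause_has_neg c q -> q \in clause_vars c.
Proof.
elim: c => [|l c IH] //= /orP [H|H]; rewrite mem_cat; apply/orP; last by right; apply: IH.
left; case: l H => //= q' /eqP ->; by rewrite inE.
Qed.

Lemma clause_vars_phi (x : S) c lv q : nd x = Some (NClause c, lv) -> q \in clause_vars c ->
  q \in cnf_vars phi.
Proof.
rewrite /nd. case: (val x) => //= p H Hq. exact: (vars_all.2.2 phi (md_cnf phi) p _ _ H).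
Qed.

Lemma clause_child_pos (x : S) c lv j q : nd x = Some (NClause c, lv) ->
  clause_at c lv [:: j] = Some (NLit (LPos q), lv) ->
  exists y : S, isOc phi (val x) (val y) /\ val y = inr q.
Proof.
move=> Hx Hj. have [l [[<-] _ _ _ [Hp _]]] := clause_step_gen Hj.
have Hq := Hp q erefl.
have [y Ey] := mkvar (clause_vars_phi Hx (has_pos_vars Hq)).
exists y; split=> //. move: Hx; rewrite /nd Ey. case: (val x) => //= p ->. done.
Qed.

Lemma clause_child_neg (x : S) c lv j q : nd x = Some (NClause c, lv) ->
  clause_at c lv [:: j] = Some (NLit (LNeg q), lv) ->
  exists y : S, isOcb phi (val x) (val y) /\ val y = inr q.
Proof.
move=> Hx Hj. have [l [[<-] _ _ _ [_ Hn]]] := clause_step_gen Hj.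
have Hq := Hn q erefl.
have [y Ey] := mkvar (clause_vars_phi Hx (has_neg_vars Hq)).
exists y; split=> //. move: Hx; rewrite /nd Ey. case: (val x) => //= p ->. done.
Qed.

Lemma clause_child_lit (x : S) c lv j l : nd x = Some (NClause c, lv) ->
  clause_at c lv [:: j] = Some (NLit l, lv) ->
  (if l is LBox _ then true else if l is LDia _ then true else false) ->
  exists y : S, isOc phi (val x) (val y) /\ nd y = Some (NLit l, lv).
Proof.
move=> Hx Hj Hl. move: Hx; rewrite /nd. case Ex: (val x) => [p|//] /= Hx.
have Hp := node_rcons j Hx. rewrite /= Hj in Hp.
have [y [Ey Hy]] := mkel Hp (ltac:(move: Hl; clear; by case: l)).
exists y; split; last by rewrite Ey.
rewrite Ey /= child_rcons /= /isCl /isLt /isB /isD /= Hx Hp. move: Hl; clear; by case: l.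
Qed.

Lemma box_child (y : S) c lv : nd y = Some (NLit (LBox c), lv) -> clause_nonempty c ->
  exists z : S, isOc phi (val y) (val z) /\ nd z = Some (NClause c, lv.-1).
Proof.
rewrite /nd. case Ey: (val y) => [p|//] /= Hy Hc.
have Hp := node_rcons 0 Hy. rewrite /= clause_at_nil in Hp.
have [z [Ez Hz]] := mkel Hp (ltac:(move: Hc; clear; by case: c)).
exists z; split; last by rewrite Ez.
rewrite Ez /= child_rcons /= /isCl /isLt /isB /isD /= Hy Hp. move: Hc; clear; by case: c.
Qed.

Lemma dia_child (y : S) f lv k c : nd y = Some (NLit (LDia f), lv) ->
  cnf_at f lv.-1 [:: k] = Some (NClause c, lv.-1) ->
  exists z : S, isOc phi (val y) (val z) /\ nd z = Some (NClause c, lv.-1).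
Proof.
move=> Hy0 Hk. have := nd_wf Hy0. move=> /= /andP [_ Wf].
have [c' [[<-] _ _ Hne]] := cnf_step_gen Hk. have {}Hne := Hne Wf.
move: Hy0; rewrite /nd. case Ey: (val y) => [p|//] /= Hy.
have Hp := node_rcons k Hy. rewrite /= Hk in Hp.
have [z [Ez Hz]] := mkel Hp (ltac:(move: Hne; clear; by case: c)).
exists z; split; last by rewrite Ez.
change (isOc phi (val y) (val z)). rewrite Ey Ez /= child_rcons /= /isCl /isLt /isB /isD /= Hy Hp. move: Hne; clear; by case: c.
Qed.

End Main.



Definition bdec (P : Prop) : bool := if excluded_middle_informative P then true else false.
Lemma bdecP P : bdec P <-> P.
Proof. rewrite /bdec; case: excluded_middle_informative => //. Qed.

Section Comp.
Variable phi : cnf.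
Hypothesis Hwf : wf_cnf phi.
Local Notation S := (Sdom phi).
Local Notation A := (Sstruct phi).

Lemma CNF_of_true (W : Type) (R : W -> W -> Prop) V w (C : {set S}) :
  cnf_true R V w (CNF_of C) <-> forall x, x \in C -> clause_true R V w (clause_of phi (val x)).
Proof.
rewrite /CNF_of. have : forall x, (x \in C) = (x \in enum C) by move=> x; rewrite mem_enum.
move=> E. suff : cnf_true R V w (foldr FCons FNil [seq clause_of phi (val e) | e <- enum C]) <->
   forall x, x \in enum C -> clause_true R V w (clause_of phi (val x)).
  move=> ->. by split=> H x; move: (H x); rewrite E.
elim: (enum C) => [|a s IH] /=; first by split.
rewrite IH. split.
- move=> [H1 H2] x. rewrite inE => /orP [/eqP ->|] //. exact: H2.
- move=> H. split; first by apply: H; rewrite inE eqxx.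
  move=> x Hx; apply: H; by rewrite inE Hx orbT.
Qed.

Definition Hd (D Tr : {set S}) (d : S) :=
  exists x, x \in D /\ isOc phi (val x) (val d) /\ d \in Tr /\ isD phi (val d).

Definition Yd (D Tr : {set S}) (d : S) : {set S} :=
  [set z | bdec (isOc phi (val d) (val z) \/ exists b e, e \in D /\ isOc phi (val e) (val b) /\
          b \in Tr /\ isB phi (val b) /\ isOc phi (val b) (val z))].

Lemma Yd_def D Tr d : Ydef (A:=A) D Tr d (Yd D Tr d).
Proof. move=> z. by rewrite inE bdecP. Qed.

Lemma isCl_nd (x : S) : isCl phi (val x) = (if nd x is Some (NClause _, _) then true else false).
Proof. by []. Qed.
Lemma isB_nd (x : S) : isB phi (val x) = (if nd x is Some (NLit (LBox _), _) then true else false).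
Proof. by []. Qed.
Lemma isD_nd (x : S) : isD phi (val x) = (if nd x is Some (NLit (LDia _), _) then true else false).
Proof. by []. Qed.
Lemma clause_of_nd (x : S) : clause_of phi (val x) = (if nd x is Some (NClause c, _) then c else CNil).
Proof. by []. Qed.

Lemma glue (X D Tr : {set S}) : body (A:=A) X D Tr ->
  (forall d, Hd D Tr d -> sat_reflexive (CNF_of (Yd D Tr d))) ->
  sat_reflexive (CNF_of X).
Proof.
move=> [B1 B2 B3] Hsat.
have Hm : forall d, exists M : {W : Type & ((W -> W -> Prop) * (nat -> W -> Prop) * W)%type},
   (forall x, (projT2 M).1.1 x x) /\
   (Hd D Tr d -> cnf_true (projT2 M).1.1 (projT2 M).1.2 (projT2 M).2 (CNF_of (Yd D Tr d))).
  move=> d. case: (classic (Hd D Tr d)) => H.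
  - have [W [R [V [w [H1 H2]]]]] := Hsat d H. by exists (existT (fun W : Type => ((W -> W -> Prop) * (nat -> W -> Prop) * W)%type) W (R, V, w)).
  - by exists (existT (fun W : Type => ((W -> W -> Prop) * (nat -> W -> Prop) * W)%type) unit
                 ((fun _ _ => True), (fun _ _ => True), tt)).
pose Md d := proj1_sig (constructive_indefinite_description _ (Hm d)).
have MdP d := proj2_sig (constructive_indefinite_description _ (Hm d)).
pose Wd d := projT1 (Md d).
pose Rd d : Wd d -> Wd d -> Prop := (projT2 (Md d)).1.1.
pose Vd d : nat -> Wd d -> Prop := (projT2 (Md d)).1.2.
pose wd d : Wd d := (projT2 (Md d)).2.
pose Wc := option {d : S & Wd d}.
pose Rc (a b : Wc) : Prop := match a, b with
  | None, None => True
  | None, Some s => Hd D Tr (projT1 s) /\ projT2 s = wd (projT1 s)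
  | Some _, None => False
  | Some s, Some t => exists E : projT1 s = projT1 t,
       Rd (projT1 t) (eq_rect _ Wd (projT2 s) _ E) (projT2 t)
  end.
pose Vc q (a : Wc) : Prop := match a with
  | None => exists x, x \in Tr /\ val x = inr q
  | Some s => Vd (projT1 s) q (projT2 s) end.
have Hrefl : forall a, Rc a a.
  case=> [[d x]|] //=. exists erefl. exact: (MdP d).1.
have Hbis : forall d, 
  (forall l x, lit_true (Rd d) (Vd d) x l <-> lit_true Rc Vc (Some (existT _ d x)) l) /\
  (forall c x, clause_true (Rd d) (Vd d) x c <-> clause_true Rc Vc (Some (existT _ d x)) c) /\
  (forall f x, cnf_true (Rd d) (Vd d) x f <-> cnf_true Rc Vc (Some (existT _ d x)) f).
  move=> d. have := @bisim_all _ (Rd d) (Vd d) _ Rc Vc (fun x z => z = Some (existT _ d x)).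
  case.
  - by move=> x y q ->.
  - move=> x y x' -> Rx. exists (Some (existT _ d x')); split=> //. by exists erefl.
  - move=> x y y' ->. case: y' => [[d' y']|] //= [E]. destruct E => /= Rx.
    by exists y'.
  - move=> H1 [H2 H3]. split; [move=> l x|split; [move=> c x|move=> f x]].
    + exact: H1.
    + exact: H2.
    + exact: H3.
have Hmod : forall d, Hd D Tr d -> forall z, z \in Yd D Tr d ->
    forall u, u = wd d -> clause_true Rc Vc (Some (existT _ d u)) (clause_of phi (val z)).
  move=> d Hdd z Hz u ->. apply/(Hbis d).2.1.
  by move/CNF_of_true: ((MdP d).2 Hdd) => /(_ z Hz).
have step : forall x, x \in D ->
   (forall z, z \in D -> md_clause (clause_of phi (val z)) < md_clause (clause_of phi (val x)) ->
        clause_true Rc Vc None (clause_of phi (val z))) ->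
   clause_true Rc Vc None (clause_of phi (val x)).
  move=> x Hx IHz. have [Hcl Hch] := B2 x Hx.
  have [c [lv Hnd]] : exists c lv, nd x = Some (NClause c, lv).
    have : isCl phi (val x) := Hcl. rewrite isCl_nd.
    case: (nd x) => // -[[c|l] lv] // _. by exists c, lv.
  have Ecx : clause_of phi (val x) = c by rewrite clause_of_nd Hnd.
  rewrite Ecx in IHz *.
  case: Hch => [[y [Oxy yT]]|[y [Obxy ynT]]].
  - case: (Oc_clause Hnd Oxy) => [[q [Ey Hpos]]|[l [Hy [Hlc Hmd]]]].
    + apply: (has_pos_true _ Hpos). by exists y.
    + apply: Hlc. have He := nd_elem Hy.
      case: l Hy Hmd He => // [c'|f] Hy Hmd _.
      * have yB : isB phi (val y).
          by rewrite isB_nd Hy.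
        have [z [Oyz zD]] := B3 x y Hx Oxy yT yB.
        have Hz := Oc_box Hy Oyz.
        have Ecz : clause_of phi (val z) = c' by rewrite clause_of_nd Hz.
        move=> [[d u]|] /=.
        -- move=> [Hdd Eu]. rewrite -Ecz. apply: (Hmod d Hdd) => //.
           rewrite inE bdecP. right. by exists y, x.
        -- move=> _. rewrite -Ecz. apply: IHz => //. rewrite Ecz. by rewrite /= in Hmd.
      * have yD : isD phi (val y) by rewrite isD_nd Hy.
        have Hdy : Hd D Tr y by exists x.
        exists (Some (existT _ y (wd y))); split; first by split.
        apply/(Hbis y).2.2. apply: (cnf_true_step (lv := lv.-1)) => k c0 Hk.
        have [z [Oyz Hz]] := dia_child Hwf Hy Hk.
        have Ecz : clause_of phi (val z) = c0 by rewrite clause_of_nd Hz.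
        rewrite -Ecz. apply/(Hbis y).2.1. apply: (Hmod y Hdy) => //.
        by rewrite inE bdecP; left.
  - have [q [Ey Hneg]] := Ocb_clause Hnd Obxy.
    apply: (has_neg_true _ Hneg) => -[x' [Hx' Ex']].
    apply: ynT. have -> : y = x' by apply: val_inj; rewrite Ey Ex'.
    done.
have Hroot : forall n x, x \in D -> md_clause (clause_of phi (val x)) <= n ->
    clause_true Rc Vc None (clause_of phi (val x)).
  elim=> [|n IH] x Hx Hn; apply: step => // z Hz Hlt.
  - by move: (leq_trans Hlt Hn).
  - apply: IH => //. by rewrite -ltnS (leq_trans Hlt Hn).
exists Wc, Rc, Vc, None; split=> //.
apply/CNF_of_true => x Hx. apply: (Hroot _ x (B1 x Hx) (leqnn _)).
Qed.
End Comp.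

Section Sound.
Variable phi : cnf.
Hypothesis Hwf : wf_cnf phi.
Local Notation S := (Sdom phi).
Local Notation A := (Sstruct phi).

Lemma completeness i : forall X : {set S}, Zsem (A:=A) i X -> sat_reflexive (CNF_of X).
Proof.
elim: i => [|i IH] X [D [Tr [B H]]].
- apply: (glue Hwf B) => d [x [H1 [H2 [H3 H4]]]]. by case: (H x d).
- apply: (glue Hwf B) => d [x [H1 [H2 [H3 H4]]]]. apply: IH.
  exact: (H x d H1 H2 H3 H4 _ (Yd_def D Tr d)).
Qed.

Lemma isLv_nd (x : S) j : isLv phi j (val x) = (if nd x is Some (_, lv) then lv == j else false).
Proof. by []. Qed.

Lemma nd_inr (x : S) q : val x = inr q -> nd x = None.
Proof. by rewrite /nd => ->. Qed.

Section Model.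
Variables (W : Type) (R : W -> W -> Prop) (V : nat -> W -> Prop) (w : W).
Hypothesis Hr : forall x, R x x.

Definition etr (x : S) : Prop := match nd x with
  | Some (NClause c, _) => clause_true R V w c
  | Some (NLit l, _) => lit_true R V w l
  | None => False end.
Definition ttr (x : S) : Prop := match val x with inr q => V q w | inl _ => etr x end.
Definition lvl (x : S) := if nd x is Some (_, lv) then lv else 0.
Definition Dset i := [set x : S | isCl phi (val x) && (lvl x <= i) && bdec (etr x)].
Definition Tset := [set y : S | bdec (ttr y)].

Lemma inD i x : x \in Dset i -> exists c lv, [/\ nd x = Some (NClause c, lv), lv <= i &
   clause_true R V w c].
Proof.
rewrite inE => /andP [/andP [H1 H2] /bdecP H3]. move: H1 H2 H3.
rewrite isCl_nd /lvl /etr. case: (nd x) => // -[[c|//] lv] _ H2 H3. by exists c, lv.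
Qed.

Lemma inT_lit y l lv : nd y = Some (NLit l, lv) -> y \in Tset -> lit_true R V w l.
Proof.
move=> Hy. rewrite inE => /bdecP. rewrite /ttr. case E: (val y) => [p|q].
- by rewrite /etr Hy.
- by rewrite (nd_inr E) in Hy.
Qed.

Lemma Oc_lit_of_clause (x y : S) c lv : nd x = Some (NClause c, lv) -> isOc phi (val x) (val y) ->
  isB phi (val y) || isD phi (val y) -> nd y = Some (NLit (if nd y is Some (NLit l, _) then l else LPos 0), lv).
Proof.
move=> Hx Oxy. case: (Oc_clause Hx Oxy) => [[q [Ey _]]|[l [Hy _]]].
- by rewrite isB_nd isD_nd (nd_inr Ey).
- by rewrite Hy.
Qed.

Lemma sound_body i (X : {set S}) : (forall e, e \in X -> isCl phi (val e) /\ exists j, j <= i /\ isLv phi j (val e)) ->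
  cnf_true R V w (CNF_of X) -> body (A:=A) X (Dset i) Tset.
Proof.
move=> HX Hw. split.
- move=> x Hx. have [Hcl [j [Hj Hl]]] := HX x Hx.
  move/CNF_of_true: Hw => /(_ x Hx). move: Hcl Hl.
  rewrite inE isCl_nd isLv_nd clause_of_nd /lvl /etr.
  case: (nd x) => // -[[c|//] lv] _ /eqP -> Hc. by rewrite Hj /=; apply/bdecP.
- move=> x Hx. have [c [lv [Hnd Hlv Hc]]] := inD Hx.
  split; first by rewrite /= isCl_nd Hnd.
  have [j [l [Hj Hl]]] := clause_true_step lv Hc.
  case: l Hj Hl => [q|q|c'|f] Hj Hl.
  + left. have [y [Oxy Ey]] := clause_child_pos Hnd Hj. exists y; split=> //.
    by rewrite inE; apply/bdecP; rewrite /ttr Ey.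
  + right. have [y [Oxy Ey]] := clause_child_neg Hnd Hj. exists y; split=> //.
    by rewrite inE => /bdecP; rewrite /ttr Ey.
  + left. have [y [Oxy Ey]] := clause_child_lit Hnd Hj erefl. exists y; split=> //.
    rewrite inE; apply/bdecP; rewrite /ttr.
    case E: (val y) => [p|q]; last by rewrite (nd_inr E) in Ey.
    by rewrite /etr Ey.
  + left. have [y [Oxy Ey]] := clause_child_lit Hnd Hj erefl. exists y; split=> //.
    rewrite inE; apply/bdecP; rewrite /ttr.
    case E: (val y) => [p|q]; last by rewrite (nd_inr E) in Ey.
    by rewrite /etr Ey.
- move=> x y Hx Oxy yT yB. have [c [lv [Hnd Hlv Hc]]] := inD Hx.
  have := Oc_lit_of_clause Hnd Oxy (ltac:(by rewrite /= in yB; rewrite yB)).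
  move: yB; rewrite /= isB_nd. case Hy: (nd y) => [[n lv']|] //.
  case: n Hy => [//|[//|//|c'|//]] Hy _ [E]. subst lv'.
  have Hl := inT_lit Hy yT. have Hc' := Hl w (Hr w).
  have Hne : clause_nonempty c' by case: c' Hy Hl Hc'.
  have [z [Oyz Hz]] := box_child Hy Hne. exists z; split=> //.
  rewrite inE /lvl Hz isCl_nd Hz /=. apply/andP; split.
  + by rewrite (leq_trans (leq_pred _) Hlv).
  + by apply/bdecP; rewrite /etr Hz.
Qed.

End Model.

Lemma Oc_B (x y : S) c lv : nd x = Some (NClause c, lv) -> isOc phi (val x) (val y) ->
  isB phi (val y) -> exists c', nd y = Some (NLit (LBox c'), lv).
Proof.
move=> Hx Oxy. case: (Oc_clause Hx Oxy) => [[q [Ey _]]|[l [Hy _]]].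
- by rewrite isB_nd (nd_inr Ey).
- rewrite isB_nd Hy. case: l Hy => // c' Hy _. by exists c'.
Qed.

Lemma Oc_D (x y : S) c lv : nd x = Some (NClause c, lv) -> isOc phi (val x) (val y) ->
  isD phi (val y) -> exists f, nd y = Some (NLit (LDia f), lv).
Proof.
move=> Hx Oxy. case: (Oc_clause Hx Oxy) => [[q [Ey _]]|[l [Hy _]]].
- by rewrite isD_nd (nd_inr Ey).
- rewrite isD_nd Hy. case: l Hy => // f Hy _. by exists f.
Qed.

Lemma soundness i : forall X : {set S},
  (forall e, e \in X -> isCl phi (val e) /\ exists j, j <= i /\ isLv phi j (val e)) ->
  sat_reflexive (CNF_of X) -> Zsem (A:=A) i X.
Proof.
elim: i => [|i IH] X HX [W [R [V [w [Hr Hw]]]]].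
- exists (Dset R V w 0), (Tset R V w); split; first exact: sound_body.
  move=> x y [Hx [Oxy [yT yD]]]. have [c [lv [Hnd Hlv _]]] := inD Hx.
  have [f Hy] := Oc_D Hnd Oxy yD. have := nd_md Hy. rewrite /=.
  by move: Hlv; rewrite leqn0 => /eqP ->.
- exists (Dset R V w i.+1), (Tset R V w); split; first exact: sound_body.
  move=> x y Hx Oxy yT yD Y HY. have [c [lv [Hnd Hlv _]]] := inD Hx.
  have [f Hy] := Oc_D Hnd Oxy yD. have [v [Rwv Hv]] := inT_lit Hy yT.
  have HYz : forall z, z \in Y -> exists c0 lv0, [/\ nd z = Some (NClause c0, lv0), lv0 <= i &
        clause_true R V v c0].
    move=> z /HY [Oyz|[b [e [eD [Oeb [bT [bB Obz]]]]]]].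
    + have [c0 [Hz Hc0]] := Oc_dia Hy Oyz. exists c0, lv.-1; split=> //.
      * by rewrite -subn1 leq_subLR add1n.
      * exact: Hc0.
    + have [ce [lve [Hne Hlve _]]] := inD eD. have [c' Hb] := Oc_B Hne Oeb bB.
      have Hbt := inT_lit Hb bT. have Hz := Oc_box Hb Obz.
      exists c', lve.-1; split=> //.
      * by rewrite -subn1 leq_subLR add1n.
      * exact: Hbt.
  apply: IH.
  + move=> z /HYz [c0 [lv0 [Hz Hlv0 _]]]. rewrite isCl_nd Hz. split=> //.
    exists lv0; split=> //. by rewrite isLv_nd Hz.
  + exists W, R, V, v; split=> //. apply/CNF_of_true => z /HYz [c0 [lv0 [Hz _ Hc0]]].
    by rewrite clause_of_nd Hz.
Qed.
End Sound.

Theorem mainTheorem5 :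
  exists c : nat, forall i : nat, exists zeta : mso,
    one_free_setvar zeta /\ mso_len zeta <= c * i.+1 /\
    forall phi : cnf, wf_cnf phi ->
    forall C : {set rdom (Sstruct phi)},
      (forall e, e \in C ->
         @rCl (Sstruct phi) e /\ exists j, j <= i /\ @rLv (Sstruct phi) j e) ->
      (sat_reflexive (CNF_of C) <-> @models1 (Sstruct phi) zeta C).
Proof.
exists 100 => i. exists (zeta i). split; [|split].
- split; first exact: fv1_zeta.
  move=> x Hx. have := allP (fv2_zeta i) x Hx. by rewrite inE.
- exact: len_zeta.
- move=> phi Hwf C HC. rewrite /models1 zeta_eval /=. split.
  + exact: soundness.
  + exact: completeness.
Qed.
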